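(* Let $X\sim\mathrm{ECR}(\beta,\lambda)$ and $r\in(-2\beta,1)$. Then $\mathbb E(X^r)$ is finite and $$\mathbb E(X^r)=\beta(\lambda\sqrt2)^r\,B\!\left(1-r,\tfrac r2+\beta\right)\,{}_2F_1\!\left(-\tfrac r2,\tfrac r2+\beta;\,1-\tfrac r2+\beta;\,\tfrac12\right).$$
   Context: The exponentiated Cauchy–Rayleigh distribution $\mathrm{ECR}(\beta,\lambda)$, with shape parameter $\beta>0$ and scale parameter $\lambda>0$, is the distribution on $(0,\infty)$ with cdf $F(x)=\left(1-\frac{\lambda}{\sqrt{\lambda^2+x^2}}\right)^{\beta}$ for $x>0$. $B(\cdot,\cdot)$ is the beta function and ${}_2F_1(a,b;c;z)=\sum_{k\ge0}\frac{(a)_k(b)_k}{(c)_k}\frac{z^k}{k!}$ is the Gauss hypergeometric function, with $(a)_k=\Gamma(a+k)/\Gamma(a)$. *)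

(* Defs.v *)
From Stdlib Require Import Reals Arith.
Open Scope R_scope.

Definition ECR_cdf (beta lambda x : R) : R :=
  if Rle_dec x 0 then 0
  else Rpower (1 - lambda / sqrt (lambda ^ 2 + x ^ 2)) beta.

Definition improper_int_0_inf (g : R -> R) (l : R) : Prop :=
  (forall u v, 0 < u -> u <= v -> inhabited (Riemann_integrable g u v)) /\
  (forall eps, eps > 0 -> exists d, d > 0 /\ exists M,
     forall u v (pr : Riemann_integrable g u v),
       0 < u < d -> M < v -> Rabs (RiemannInt pr - l) < eps).

Definition improper_int_0_1 (g : R -> R) (l : R) : Prop :=
  (forall u v, 0 < u -> u <= v -> v < 1 -> inhabited (Riemann_integrable g u v)) /\
  (forall eps, eps > 0 -> exists d, d > 0 /\
     forall u v (pr : Riemann_integrable g u v),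
       0 < u < d -> 1 - d < v < 1 -> Rabs (RiemannInt pr - l) < eps).

Definition is_Beta (a b l : R) : Prop :=
  improper_int_0_1 (fun t => Rpower t (a - 1) * Rpower (1 - t) (b - 1)) l.

Fixpoint poch (a : R) (k : nat) : R :=
  match k with
  | O => 1
  | S k' => poch a k' * (a + INR k')
  end.

Definition is_hyp2F1 (a b c z l : R) : Prop :=
  infinite_sum (fun k => poch a k * poch b k / poch c k * z ^ k / INR (Factorial.fact k)) l.

(* Main.v *)
Require Import Defs.
From Stdlib Require Import Reals Lra Lia Classical Factorial.
From Coquelicot Require Import Coquelicot.
Open Scope R_scope.

Lemma Rpower_pos x e : 0 < Rpower x e.
Proof. unfold Rpower; apply exp_pos. Qed.

Lemma is_derive_Rpower x e : 0 < x ->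
  is_derive (fun y => Rpower y e) x (e * Rpower x (e - 1)).
Proof.
  intros Hx. unfold Rpower.
  evar (l : R). replace (e * exp ((e-1) * ln x)) with l.
  - apply (is_derive_ext (fun y => exp (e * ln y))). { intros; reflexivity. }
    unfold l; auto_derive. lra. reflexivity.
  - unfold l. replace ((e-1) * ln x) with (e * ln x + - ln x) by ring.
    rewrite exp_plus, exp_Ropp, exp_ln by lra. field. lra.
Qed.

Lemma continuous_Rpower x e : 0 < x -> continuous (fun y => Rpower y e) x.
Proof.
  intros Hx. apply (@ex_derive_continuous R_AbsRing R_NormedModule). eexists. apply is_derive_Rpower; auto.
Qed.

Lemma Rpower_le_1 x e : 0 < x <= 1 -> 0 <= e -> Rpower x e <= 1.
Proof.
  intros Hx He. unfold Rpower. rewrite <- exp_0.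
  assert (ln x <= 0). { rewrite <- ln_1. destruct (Req_dec x 1). subst; lra. left; apply ln_increasing; lra. }
  destruct (Req_dec (e * ln x) 0) as [E|E]. rewrite E; lra.
  apply Rlt_le, exp_increasing. nra.
Qed.

Definition cont01 (g : R -> R) := forall x, 0 < x < 1 -> continuous g x.
Definition lim01 (g : R -> R) (l : R) := forall eps, 0 < eps -> exists d, 0 < d /\
  forall u v, 0 < u < d -> 1 - d < v < 1 -> Rabs (RInt g u v - l) < eps.

Lemma minmax_in u v z : 0 < u < 1 -> 0 < v < 1 -> Rmin u v <= z <= Rmax u v -> 0 < z < 1.
Proof. intros. unfold Rmin, Rmax in *. destruct Rle_dec; lra. Qed.

Lemma ex_RInt01 g u v : cont01 g -> 0 < u < 1 -> 0 < v < 1 -> ex_RInt g u v.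
Proof.
  intros Hg Hu Hv. apply (ex_RInt_continuous (V:=R_CompleteNormedModule)). intros z Hz. apply Hg.
  eapply minmax_in; [exact Hu|exact Hv|exact Hz].
Qed.

Lemma lim01_unique g l1 l2 : lim01 g l1 -> lim01 g l2 -> l1 = l2.
Proof.
  intros H1 H2. apply Rminus_diag_uniq_sym. apply Rabs_eq_0.
  apply Rle_antisym; [|apply Rabs_pos].
  apply Rnot_lt_le. intros Hlt.
  set (eps := Rabs (l2 - l1) / 2).
  destruct (H1 eps) as [d1 [Hd1 K1]]. unfold eps; lra.
  destruct (H2 eps) as [d2 [Hd2 K2]]. unfold eps; lra.
  set (d := Rmin (Rmin d1 d2) (1/2)).
  assert (0 < d) by (unfold d; repeat apply Rmin_glb_lt; lra).
  assert (d <= d1 /\ d <= d2 /\ d <= 1/2).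
  { unfold d. split; [|split].
    eapply Rle_trans; [apply Rmin_l|apply Rmin_l].
    eapply Rle_trans; [apply Rmin_l|apply Rmin_r]. apply Rmin_r. }
  specialize (K1 (d/2) (1 - d/2)). specialize (K2 (d/2) (1 - d/2)).
  assert (A1 : Rabs (RInt g (d/2) (1-d/2) - l1) < eps) by (apply K1; lra).
  assert (A2 : Rabs (RInt g (d/2) (1-d/2) - l2) < eps) by (apply K2; lra).
  unfold eps in *.
  assert (Rabs (l2 - l1) <= Rabs (RInt g (d/2) (1-d/2) - l1) + Rabs (RInt g (d/2) (1-d/2) - l2)).
  { replace (l2 - l1) with ((RInt g (d/2) (1-d/2) - l1) - (RInt g (d/2) (1-d/2) - l2)) by ring.
    eapply Rle_trans. apply Rabs_triang. rewrite Rabs_Ropp. lra. }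
  lra.
Qed.

Lemma small_d d1 d2 : 0 < d1 -> 0 < d2 -> exists d, 0 < d /\ d <= d1 /\ d <= d2 /\ d <= 1/2.
Proof.
  intros. exists (Rmin (Rmin d1 d2) (1/2)). split. repeat apply Rmin_glb_lt; lra.
  split; [|split].
  eapply Rle_trans; [apply Rmin_l|apply Rmin_l].
  eapply Rle_trans; [apply Rmin_l|apply Rmin_r]. apply Rmin_r.
Qed.

Lemma lim01_plus g h l1 l2 : cont01 g -> cont01 h -> lim01 g l1 -> lim01 h l2 ->
  lim01 (fun x => g x + h x) (l1 + l2).
Proof.
  intros Cg Ch H1 H2 eps Heps.
  destruct (H1 (eps/2)) as [d1 [Hd1 K1]]. lra.
  destruct (H2 (eps/2)) as [d2 [Hd2 K2]]. lra.
  destruct (small_d d1 d2 Hd1 Hd2) as [d [Hd [D1 [D2 D3]]]].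
  exists d. split; auto. intros u v Hu Hv.
  assert (E : RInt (fun x => g x + h x) u v = RInt g u v + RInt h u v).
  { apply (RInt_plus g h); apply ex_RInt01; auto; lra. }
  rewrite E.
  assert (Rabs (RInt g u v - l1) < eps/2) by (apply K1; lra).
  assert (Rabs (RInt h u v - l2) < eps/2) by (apply K2; lra).
  replace (RInt g u v + RInt h u v - (l1 + l2)) with ((RInt g u v - l1) + (RInt h u v - l2)) by ring.
  eapply Rle_lt_trans. apply Rabs_triang. lra.
Qed.

Lemma lim01_scal c g l : cont01 g -> lim01 g l -> lim01 (fun x => c * g x) (c * l).
Proof.
  intros Cg H eps Heps.
  destruct (H (eps / (Rabs c + 1))) as [d [Hd K]].
  { apply Rdiv_lt_0_compat; auto. pose proof (Rabs_pos c); lra. }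
  destruct (small_d d d Hd Hd) as [d' [Hd' [D1 [_ D3]]]].
  exists d'. split; auto. intros u v Hu Hv.
  assert (E : RInt (fun x => c * g x) u v = c * RInt g u v).
  { apply (RInt_scal g u v c). apply ex_RInt01; auto; lra. }
  rewrite E. assert (K' : Rabs (RInt g u v - l) < eps / (Rabs c + 1)) by (apply K; lra). clear K.
  replace (c * RInt g u v - c * l) with (c * (RInt g u v - l)) by ring.
  rewrite Rabs_mult. pose proof (Rabs_pos c).
  pose proof (Rabs_pos (RInt g u v - l)).
  apply Rle_lt_trans with ((Rabs c + 1) * Rabs (RInt g u v - l)). apply Rmult_le_compat_r; lra.
  replace eps with ((Rabs c + 1) * (eps / (Rabs c + 1))) by (field; lra).
  apply Rmult_lt_compat_l; lra.
Qed.

Lemma lim01_ext g h l : (forall x, 0 < x < 1 -> g x = h x) -> lim01 g l -> lim01 h l.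
Proof.
  intros E H eps Heps. destruct (H eps Heps) as [d [Hd K]].
  destruct (small_d d d Hd Hd) as [d' [Hd' [D1 [_ D3]]]].
  exists d'. split; auto. intros u v Hu Hv.
  rewrite <- (RInt_ext g h). apply K; lra.
  intros x Hx. apply E. eapply minmax_in with (u:=u) (v:=v); try lra.
Qed.

Lemma cont01_plus g h : cont01 g -> cont01 h -> cont01 (fun x => g x + h x).
Proof. intros A B x Hx. apply (continuous_plus g h); auto. Qed.
Lemma cont01_mult g h : cont01 g -> cont01 h -> cont01 (fun x => g x * h x).
Proof. intros A B x Hx. apply (continuous_mult g h); auto. Qed.
Lemma cont01_scal c g : cont01 g -> cont01 (fun x => c * g x).
Proof. intros A x Hx. apply (continuous_mult (fun _ => c) g); auto. apply continuous_const. Qed.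

Lemma lub_approx (E : R -> Prop) m eps : is_lub E m -> 0 < eps -> exists y, E y /\ m - eps < y.
Proof.
  intros [Hub Hl] He. apply NNPP. intro N.
  assert (is_upper_bound E (m - eps)).
  { intros y Hy. apply Rnot_lt_le. intro Hlt. apply N. exists y; auto. }
  specialize (Hl _ H). lra.
Qed.

Lemma lim01_exists g K : cont01 g -> (forall x, 0 < x < 1 -> 0 <= g x) ->
  (forall u v, 0 < u -> u <= v -> v < 1 -> RInt g u v <= K) ->
  exists l, lim01 g l.
Proof.
  intros Cg Pg Bg.
  set (E1 := fun y => exists u, 0 < u <= 1/2 /\ y = RInt g u (1/2)).
  set (E2 := fun y => exists v, 1/2 <= v < 1 /\ y = RInt g (1/2) v).
  destruct (completeness E1) as [L1 HL1].
  { exists K. intros y [u [Hu ->]]. apply Bg; lra. }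
  { exists (RInt g (1/2) (1/2)). exists (1/2). split; [lra|reflexivity]. }
  destruct (completeness E2) as [L2 HL2].
  { exists K. intros y [v [Hv ->]]. apply Bg; lra. }
  { exists (RInt g (1/2) (1/2)). exists (1/2). split; [lra|reflexivity]. }
  exists (L1 + L2). intros eps Heps.
  destruct (lub_approx E1 L1 (eps/2) HL1) as [y1 [[u0 [Hu0 ->]] Hy1]]. lra.
  destruct (lub_approx E2 L2 (eps/2) HL2) as [y2 [[v0 [Hv0 ->]] Hy2]]. lra.
  assert (Hd : 0 < Rmin u0 (1 - v0)) by (apply Rmin_glb_lt; lra).
  exists (Rmin u0 (1 - v0)). split; auto.
  intros u v Hu Hv.
  pose proof (Rmin_l u0 (1-v0)). pose proof (Rmin_r u0 (1-v0)).
  assert (C1 : RInt g u (1/2) <= L1) by (apply (proj1 HL1); exists u; split; [lra|reflexivity]).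
  assert (C2 : RInt g (1/2) v <= L2) by (apply (proj1 HL2); exists v; split; [lra|reflexivity]).
  assert (C3 : RInt g u0 (1/2) <= RInt g u (1/2)).
  { rewrite <- (RInt_Chasles g u u0 (1/2)). 2,3: apply ex_RInt01; auto; lra.
    assert (0 <= RInt g u u0). apply RInt_ge_0. lra. apply ex_RInt01; auto; lra.
    intros; apply Pg; lra. change (plus ?a ?b) with (a + b). lra. }
  assert (C4 : RInt g (1/2) v0 <= RInt g (1/2) v).
  { rewrite <- (RInt_Chasles g (1/2) v0 v). 2,3: apply ex_RInt01; auto; lra.
    assert (0 <= RInt g v0 v). apply RInt_ge_0. lra. apply ex_RInt01; auto; lra.
    intros; apply Pg; lra. change (plus ?a ?b) with (a + b). lra. }
  rewrite <- (RInt_Chasles g u (1/2) v). 2,3: apply ex_RInt01; auto; lra.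
  change (plus ?a ?b) with (a + b).
  apply Rabs_def1; lra.
Qed.

Definition P (p q s : R) := Rpower s (p - 1) * Rpower (1 - s) (q - 1).

Lemma is_derive_Rpower1m s e : s < 1 ->
  is_derive (fun y => Rpower (1 - y) e) s (- (e * Rpower (1 - s) (e - 1))).
Proof.
  intros Hs.
  apply (is_derive_ext (fun y => (fun z => Rpower z e) ((fun y => 1 - y) y))). { reflexivity. }
  replace (- (e * Rpower (1 - s) (e - 1))) with ((-1) * (e * Rpower (1 - s) (e - 1))) by ring.
  apply (is_derive_comp (fun z => Rpower z e) (fun y => 1 - y)).
  apply is_derive_Rpower; lra.
  auto_derive; auto.
Qed.

Lemma continuous_Rpower1m s e : s < 1 -> continuous (fun y => Rpower (1 - y) e) s.
Proof.
  intros Hs. apply (@ex_derive_continuous R_AbsRing R_NormedModule). eexists. apply is_derive_Rpower1m; auto.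
Qed.

Lemma cont01_P p q : cont01 (P p q).
Proof.
  intros x Hx. unfold P. apply (continuous_mult (fun s => Rpower s (p-1)) (fun s => Rpower (1-s) (q-1))).
  apply continuous_Rpower; lra. apply continuous_Rpower1m; lra.
Qed.

Lemma Rpower_lt_base x y e : 0 < x -> x < y -> 0 < e -> Rpower x e < Rpower y e.
Proof.
  intros. unfold Rpower. apply exp_increasing. apply Rmult_lt_compat_l; auto.
  apply ln_increasing; auto.
Qed.

Lemma Rpower_le_exp2 y e : 1/2 <= y <= 1 -> Rpower y e <= Rpower 2 (Rabs e).
Proof.
  intros Hy. unfold Rpower.
  assert (ln y <= 0). { rewrite <- ln_1. destruct (Req_dec y 1). subst; lra. left; apply ln_increasing; lra. }
  assert (- ln 2 <= ln y).
  { rewrite <- ln_Rinv by lra. destruct (Req_dec y (/2)). subst; lra. left; apply ln_increasing; lra. }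
  assert (0 < ln 2) by (rewrite <- ln_1; apply ln_increasing; lra).
  destruct (Req_dec (e * ln y) (Rabs e * ln 2)) as [E|E]. rewrite E; lra.
  left. apply exp_increasing.
  assert (e * ln y <= Rabs e * ln 2).
  { unfold Rabs; destruct Rcase_abs.
    - assert (0 <= -e * (ln y + ln 2)) by (apply Rmult_le_pos; lra). nra.
    - assert (e * ln y <= 0) by (rewrite Rmult_comm; apply Rmult_le_0_r; lra). nra. }
  lra.
Qed.

Lemma Rpower_mono_exp x e1 e2 : 1 <= x -> e1 <= e2 -> Rpower x e1 <= Rpower x e2.
Proof.
  intros. unfold Rpower. assert (0 <= ln x) by (rewrite <- ln_1; destruct (Req_dec x 1); [subst; lra|left; apply ln_increasing; lra]).
  destruct (Req_dec (e1 * ln x) (e2 * ln x)) as [E|E]. rewrite E; lra.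
  left; apply exp_increasing. nra.
Qed.

Definition CB p q := Rpower 2 (Rabs (p - 1) + Rabs (q - 1)).

Lemma P_bound p q s : 0 < s < 1 ->
  P p q s <= CB p q * (Rpower s (p - 1) + Rpower (1 - s) (q - 1)).
Proof.
  intros Hs. unfold P, CB.
  pose proof (Rpower_pos s (p-1)). pose proof (Rpower_pos (1-s) (q-1)).
  destruct (Rle_dec s (1/2)).
  - assert (Rpower (1-s) (q-1) <= Rpower 2 (Rabs (p - 1) + Rabs (q - 1))).
    { eapply Rle_trans. apply Rpower_le_exp2. lra. apply Rpower_mono_exp. lra.
      pose proof (Rabs_pos (p-1)); lra. }
    nra.
  - assert (Rpower s (p-1) <= Rpower 2 (Rabs (p - 1) + Rabs (q - 1))).
    { eapply Rle_trans. apply Rpower_le_exp2. lra. apply Rpower_mono_exp. lra.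
      pose proof (Rabs_pos (q-1)); lra. }
    nra.
Qed.

Lemma ex_lim01_P p q : 0 < p -> 0 < q -> exists l, lim01 (P p q) l.
Proof.
  intros Hp Hq.
  apply (lim01_exists _ (CB p q * (1/p + 1/q))).
  - apply cont01_P.
  - intros. unfold P. pose proof (Rpower_pos x (p-1)). pose proof (Rpower_pos (1-x) (q-1)). nra.
  - intros u v Hu Huv Hv.
    set (F := fun s => CB p q * (Rpower s p / p - Rpower (1 - s) q / q)).
    set (dF := fun s => CB p q * (Rpower s (p - 1) + Rpower (1 - s) (q - 1))).
    assert (HR : is_RInt dF u v (minus (F v) (F u))).
    { apply (is_RInt_derive F dF).
      - intros x Hx. assert (0 < x < 1) by (unfold Rmin, Rmax in Hx; destruct Rle_dec; lra).
        unfold F, dF.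
        apply (is_derive_ext (fun s => CB p q * ((/p) * Rpower s p + (-/q) * Rpower (1 - s) q))).
        { intros t. cbv beta. match goal with |- ?a = ?b => change (@eq R a b) end; unfold Rdiv; ring. }
        apply (is_derive_scal (fun s => ((/p) * Rpower s p + (-/q) * Rpower (1 - s) q))).
        replace (Rpower x (p - 1) + Rpower (1 - x) (q - 1)) with
          ((/p) * (p * Rpower x (p-1)) + (-/q) * (- (q * Rpower (1 - x) (q - 1)))) by (field; lra).
        apply (is_derive_plus (fun s => (/p) * Rpower s p) (fun s => (-/q) * Rpower (1 - s) q)).
        apply (is_derive_scal (fun s => Rpower s p)). apply is_derive_Rpower; lra.
        apply (is_derive_scal (fun s => Rpower (1 - s) q)). apply is_derive_Rpower1m; lra.
      - intros x Hx. assert (0 < x < 1) by (unfold Rmin, Rmax in Hx; destruct Rle_dec; lra).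
        unfold dF. apply (continuous_mult (fun _ => CB p q)). apply continuous_const.
        apply (continuous_plus (fun s => Rpower s (p-1)) (fun s => Rpower (1 - s) (q-1))).
        apply continuous_Rpower; lra. apply continuous_Rpower1m; lra. }
    apply Rle_trans with (RInt dF u v).
    + apply RInt_le; auto. apply ex_RInt01; try lra. apply cont01_P.
      eexists; exact HR. intros; apply P_bound; lra.
    + rewrite (is_RInt_unique _ _ _ _ HR). unfold F, minus, plus, opp; simpl.
      assert (0 < CB p q) by apply Rpower_pos.
      assert (Rpower v p <= 1) by (apply Rpower_le_1; lra).
      assert (Rpower (1-u) q <= 1) by (apply Rpower_le_1; lra).
      pose proof (Rpower_pos u p). pose proof (Rpower_pos (1-v) q).
      assert (Rpower v p / p <= 1/p) by (apply Rmult_le_compat_r; [left; apply Rinv_0_lt_compat|]; lra).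
      assert (Rpower (1-u) q / q <= 1/q) by (apply Rmult_le_compat_r; [left; apply Rinv_0_lt_compat|]; lra).
      assert (0 < Rpower u p / p) by (apply Rdiv_lt_0_compat; lra).
      assert (0 < Rpower (1-v) q / q) by (apply Rdiv_lt_0_compat; lra).
      replace (CB p q * (Rpower v p / p - Rpower (1 - v) q / q) +
  - (CB p q * (Rpower u p / p - Rpower (1 - u) q / q))) with
       (CB p q * ((Rpower v p / p - Rpower (1 - v) q / q) - (Rpower u p / p - Rpower (1 - u) q / q))) by ring.
      apply Rmult_le_compat_l; lra.
Qed.

Lemma Rpower_succ x e : 0 < x -> Rpower x (e + 1) = Rpower x e * x.
Proof. intros. rewrite Rpower_plus, Rpower_1; auto. Qed.

Lemma P_split p q s : 0 < s < 1 -> P p q s = P p (q + 1) s + P (p + 1) q s.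
Proof.
  intros Hs. unfold P.
  replace (q + 1 - 1) with ((q - 1) + 1) by ring. replace (p + 1 - 1) with ((p - 1) + 1) by ring.
  rewrite !Rpower_succ by lra. ring.
Qed.

Lemma Rpower_inv_small a e : 0 < a -> 0 < e -> Rpower (Rpower a (/e)) e = a.
Proof.
  intros. rewrite Rpower_mult. rewrite Rinv_l by lra. apply Rpower_1; auto.
Qed.

Lemma lim01_boundary p q : 0 < p -> 0 < q ->
  lim01 (fun s => p * P p (q + 1) s + (- q) * P (p + 1) q s) 0.
Proof.
  intros Hp Hq eps Heps.
  set (d1 := Rpower (eps/2) (/p)). set (d2 := Rpower (eps/2) (/q)).
  assert (0 < d1) by apply Rpower_pos. assert (0 < d2) by apply Rpower_pos.
  destruct (small_d d1 d2) as [d [Hd [D1 [D2 D3]]]]; auto.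
  exists d. split; auto. intros u v Hu Hv.
  set (G := fun s => Rpower s p * Rpower (1 - s) q).
  set (df := fun s => p * P p (q + 1) s + (- q) * P (p + 1) q s).
  assert (HR : is_RInt df u v (minus (G v) (G u))).
  { apply (is_RInt_derive G df).
    - intros x Hx. assert (0 < x < 1) by (unfold Rmin, Rmax in Hx; destruct Rle_dec; lra).
      unfold G, df, P. replace (q + 1 - 1) with q by ring. replace (p + 1 - 1) with p by ring.
      replace (p * (Rpower x (p - 1) * Rpower (1 - x) q) + - q * (Rpower x p * Rpower (1 - x) (q - 1)))
        with ((p * Rpower x (p - 1)) * Rpower (1 - x) q + Rpower x p * (- (q * Rpower (1 - x) (q - 1)))) by ring.
      apply (is_derive_mult (fun s => Rpower s p) (fun s => Rpower (1 - s) q)).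
      apply is_derive_Rpower; lra. apply is_derive_Rpower1m; lra.
      intros; simpl; apply Rmult_comm.
    - intros x Hx. assert (0 < x < 1) by (unfold Rmin, Rmax in Hx; destruct Rle_dec; lra).
      apply (cont01_plus (fun s => p * P p (q + 1) s) (fun s => (- q) * P (p + 1) q s)); auto;
      apply cont01_scal; apply cont01_P. }
  rewrite (is_RInt_unique _ _ _ _ HR). unfold G, minus, plus, opp; simpl.
  assert (Rpower (1-u) q <= 1) by (apply Rpower_le_1; lra).
  assert (Rpower v p <= 1) by (apply Rpower_le_1; lra).
  pose proof (Rpower_pos u p). pose proof (Rpower_pos (1-v) q).
  pose proof (Rpower_pos (1-u) q). pose proof (Rpower_pos v p).
  assert (Rpower u p < eps/2).
  { replace (eps/2) with (Rpower d1 p) by (apply Rpower_inv_small; lra).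
    apply Rpower_lt_base; lra. }
  assert (Rpower (1 - v) q < eps/2).
  { replace (eps/2) with (Rpower d2 q) by (apply Rpower_inv_small; lra).
    apply Rpower_lt_base; lra. }
  assert (Rpower u p * Rpower (1 - u) q <= Rpower u p) by nra.
  assert (Rpower v p * Rpower (1 - v) q <= Rpower (1 - v) q) by nra.
  assert (0 < Rpower u p * Rpower (1 - u) q) by nra.
  assert (0 < Rpower v p * Rpower (1 - v) q) by nra.
  apply Rabs_def1; lra.
Qed.

Lemma Beta_rec p q B : 0 < p -> 0 < q -> lim01 (P p q) B ->
  lim01 (P p (q + 1)) (B * q / (p + q)).
Proof.
  intros Hp Hq HB.
  destruct (ex_lim01_P p (q + 1)) as [X HX]; try lra.
  destruct (ex_lim01_P (p + 1) q) as [Y HY]; try lra.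
  assert (E1 : B = X + Y).
  { eapply lim01_unique. exact HB.
    apply (lim01_ext (fun s => P p (q + 1) s + P (p + 1) q s)).
    intros; symmetry; apply P_split; auto.
    apply lim01_plus; auto; apply cont01_P. }
  assert (E2 : p * X + (- q) * Y = 0).
  { eapply lim01_unique. 2: apply lim01_boundary; auto.
    apply (lim01_plus (fun s => p * P p (q + 1) s) (fun s => - q * P (p + 1) q s)).
    all: try exact (cont01_scal p _ (cont01_P _ _)). all: try exact (cont01_scal (-q) _ (cont01_P _ _)).
    all: try (apply lim01_scal; auto; apply cont01_P). all: auto. }
  replace (B * q / (p + q)) with X; auto.
  subst B. field_simplify_eq; nra.
Qed.

Lemma poch_pos a k : 0 < a -> 0 < poch a k.
Proof.
  intros Ha. induction k; simpl. lra. pose proof (pos_INR k). nra.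
Qed.

Lemma Beta_k p q B : 0 < p -> 0 < q -> lim01 (P p q) B ->
  forall k, lim01 (P p (q + INR k)) (B * poch q k / poch (p + q) k).
Proof.
  intros Hp Hq HB k. induction k.
  - simpl. replace (q + 0) with q by ring. replace (B * 1 / 1) with B by field. auto.
  - pose proof (pos_INR k).
    replace (q + INR (S k)) with ((q + INR k) + 1) by (rewrite S_INR; ring).
    replace (B * poch q (S k) / poch (p + q) (S k)) with
      ((B * poch q k / poch (p + q) k) * (q + INR k) / (p + (q + INR k))).
    apply Beta_rec; auto; lra.
    simpl. pose proof (poch_pos (p+q) k). field. split; lra.
Qed.

Definition cb (al : R) (k : nat) := poch (- al) k / INR (fact k).

Lemma INR_fact_pos k : 0 < INR (fact k).
Proof. apply lt_0_INR. apply lt_O_fact. Qed.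

Lemma cb_S al k : cb al (S k) = cb al k * (- al + INR k) / INR (S k).
Proof.
  unfold cb. simpl poch. rewrite fact_simpl, mult_INR.
  pose proof (INR_fact_pos k). assert (0 < INR (S k)) by (apply lt_0_INR; lia).
  field. lra.
Qed.

Lemma CV_disk_cb al : CV_disk (cb al) (3/4).
Proof.
  unfold CV_disk.
  destruct (INR_unbounded (4 * Rabs al)) as [K HK].
  set (d := fun k => Rabs (cb al k * (3/4)^k)).
  assert (Step : forall m, (K <= m)%nat -> d (S m) <= 15/16 * d m).
  { intros m Hm. unfold d. rewrite cb_S. simpl pow.
    assert (0 < INR (S m)) by (apply lt_0_INR; lia).
    apply le_INR in Hm. rewrite S_INR in *.
    replace (cb al m * (- al + INR m) / (INR m + 1) * (3 / 4 * (3 / 4) ^ m))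
      with ((cb al m * (3/4)^m) * ((- al + INR m) / (INR m + 1) * (3/4))) by (field; lra).
    rewrite Rabs_mult. pose proof (Rabs_pos (cb al m * (3 / 4) ^ m)).
    rewrite Rmult_comm. apply Rmult_le_compat_r; auto.
    rewrite Rabs_mult, (Rabs_right (3/4)) by lra.
    unfold Rdiv. rewrite Rabs_mult, (Rabs_right (/ (INR m + 1))).
    2: left; apply Rinv_0_lt_compat; lra.
    assert (Rabs (- al + INR m) <= 5/4 * (INR m + 1)).
    { pose proof (pos_INR m). unfold Rabs at 1; destruct Rcase_abs;
      unfold Rabs in HK; destruct (Rcase_abs al); lra. }
    apply Rle_trans with (5/4 * (INR m + 1) * / (INR m + 1) * (3/4)).
    apply Rmult_le_compat_r. lra. apply Rmult_le_compat_r. left; apply Rinv_0_lt_compat; lra. auto.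
    right. field. lra. }
  assert (Geo : forall j, d (K + j)%nat <= d K * (15/16)^j).
  { induction j. rewrite Nat.add_0_r. simpl; lra.
    replace (K + S j)%nat with (S (K + j)) by lia.
    eapply Rle_trans. apply Step. lia. simpl pow.
    apply Rle_trans with (15/16 * (d K * (15/16)^j)). apply Rmult_le_compat_l; lra. right; ring. }
  apply (ex_series_incr_n d K).
  apply (ex_series_le (K:=R_AbsRing) (V:=R_CompleteNormedModule) _ (fun j => d K * (15/16)^j)).
  - intros n. unfold norm; simpl. unfold abs; simpl. rewrite Rabs_right. apply Geo.
    unfold d. apply Rle_ge, Rabs_pos.
  - apply (ex_series_scal (V:=R_NormedModule) (d K) (fun j => (15/16)^j)). apply ex_series_geom.
    rewrite Rabs_right; lra.
Qed.

Lemma radius_cb al : Rbar_le (3/4) (CV_radius (cb al)).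
Proof. apply (proj1 (Lub_Rbar_correct (CV_disk (cb al)))). apply CV_disk_cb. Qed.

Lemma inside_cb al z : Rabs z < 3/4 -> Rbar_lt (Rabs z) (CV_radius (cb al)).
Proof.
  intros Hz. pose proof (radius_cb al). destruct (CV_radius (cb al)); simpl in *; auto; lra.
Qed.

Lemma ex_series_pow a x : Rbar_lt (Rabs x) (CV_radius a) -> ex_series (fun k => a k * x ^ k).
Proof.
  intros H. pose proof (CV_radius_inside a x H) as E. unfold ex_pseries in E.
  eapply ex_series_ext; [|exact E]. intros n. simpl. rewrite pow_n_pow. unfold scal; simpl.
  unfold mult; simpl. apply Rmult_comm.
Qed.

Lemma PS_derive_cb al k : PS_derive (cb al) k = cb al k * (- al + INR k).
Proof.
  unfold PS_derive. rewrite cb_S. assert (0 < INR (S k)) by (apply lt_0_INR; lia). field. lra.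
Qed.

Lemma binom_ode al y : Rabs y < 3/4 ->
  (1 - y) * PSeries (PS_derive (cb al)) y = - al * PSeries (cb al) y.
Proof.
  intros Hy.
  assert (E1 : ex_series (fun k => cb al k * y ^ k)) by (apply ex_series_pow, inside_cb; auto).
  assert (E2 : ex_series (fun k => PS_derive (cb al) k * y ^ k)).
  { apply ex_series_pow. rewrite CV_radius_derive. apply inside_cb; auto. }
  assert (E3 : ex_series (fun k => cb al k * (- al + INR k) * y ^ k)).
  { eapply ex_series_ext; [|exact E2]. intros; simpl. rewrite PS_derive_cb. reflexivity. }
  assert (Hinc : y * PSeries (PS_derive (cb al)) y = PSeries (fun k => cb al k * (- al + INR k) + al * cb al k) y).
  { rewrite <- PSeries_incr_1. apply PSeries_ext. intros [|n]; simpl.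
    - unfold zero; simpl. ring.
    - rewrite PS_derive_cb, cb_S. change (match n with 0%nat => 1 | S _ => INR n + 1 end) with (INR (S n)).
      assert (0 < INR (S n)) by (apply lt_0_INR; lia). rewrite S_INR in *. field. lra. }
  assert (Hd : PSeries (PS_derive (cb al)) y = PSeries (fun k => cb al k * (- al + INR k)) y).
  { apply PSeries_ext. intros; apply PS_derive_cb. }
  rewrite Rmult_minus_distr_r, Rmult_1_l, Hinc, Hd.
  unfold PSeries.
  rewrite (Series_ext (fun k => (cb al k * (- al + INR k) + al * cb al k) * y ^ k)
    (fun k => cb al k * (- al + INR k) * y ^ k + al * (cb al k * y ^ k))) by (intros; ring).
  rewrite Series_plus; auto. rewrite Series_scal_l. ring.
  apply (ex_series_scal (V:=R_NormedModule) al (fun k => cb al k * y ^ k)). auto.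
Qed.

Lemma binom al z : Rabs z < 3/4 -> PSeries (cb al) z = Rpower (1 - z) al.
Proof.
  intros Hz.
  set (S := PSeries (cb al)).
  set (D := fun y => S y * Rpower (1 - y) (- al)).
  assert (HD : forall y, Rabs y < 3/4 -> is_derive D y 0).
  { intros y Hy. assert (y < 1) by (unfold Rabs in Hy; destruct Rcase_abs; lra).
    unfold D.
    replace 0 with (PSeries (PS_derive (cb al)) y * Rpower (1 - y) (- al) + S y * (- (- al * Rpower (1 - y) (- al - 1)))).
    apply (is_derive_mult S (fun y => Rpower (1 - y) (- al))).
    apply is_derive_PSeries, inside_cb; auto.
    apply is_derive_Rpower1m; auto.
    intros; simpl; apply Rmult_comm.
    replace (Rpower (1 - y) (- al)) with (Rpower (1 - y) ((- al - 1) + 1)) by (f_equal; ring).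
    rewrite Rpower_succ by lra.
    replace (PSeries (PS_derive (cb al)) y * (Rpower (1 - y) (- al - 1) * (1 - y)))
      with (Rpower (1 - y) (- al - 1) * ((1 - y) * PSeries (PS_derive (cb al)) y)) by ring.
    rewrite binom_ode by auto. unfold S. ring. }
  destruct (MVT_gen D 0 z (fun _ => 0)) as [c [Hc Hmvt]].
  - intros x Hx. apply HD. unfold Rmin, Rmax in Hx. destruct Rle_dec; unfold Rabs in *;
      repeat destruct Rcase_abs; lra.
  - intros x Hx. apply continuity_pt_filterlim.
    apply (@ex_derive_continuous R_AbsRing R_NormedModule). eexists. apply HD.
    unfold Rmin, Rmax in Hx. destruct Rle_dec; unfold Rabs in *; repeat destruct Rcase_abs; lra.
  - assert (D0 : D 0 = 1).
    { unfold D, S. rewrite PSeries_0. unfold cb. simpl. replace (1 - 0) with 1 by ring.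
      unfold Rpower. rewrite ln_1, Rmult_0_r, exp_0. field. }
    assert (Dz : D z = 1) by lra.
    unfold D in Dz.
    assert (z < 1) by (unfold Rabs in Hz; destruct Rcase_abs; lra).
    assert (Rpower (1 - z) (- al) * Rpower (1 - z) al = 1).
    { rewrite <- Rpower_plus. replace (- al + al) with 0 by ring. apply Rpower_O. lra. }
    transitivity (S z * Rpower (1 - z) (- al) * Rpower (1 - z) al).
    rewrite Rmult_assoc, H0. unfold S; ring. rewrite Dz; ring.
Qed.

Definition ak al k := cb al k * (1/2)^k.
Definition Phi al s := Rpower ((1 + s) / 2) al.

Lemma Phi_series al s : 0 < s < 1 -> is_series (fun k => ak al k * (1 - s)^k) (Phi al s).
Proof.
  intros Hs.
  assert (Hz : Rabs ((1 - s)/2) < 3/4) by (rewrite Rabs_right; lra).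
  pose proof (binom al _ Hz) as Hb.
  pose proof (Series_correct _ (ex_series_pow _ _ (inside_cb al _ Hz))) as Hc.
  unfold PSeries in Hb. rewrite Hb in Hc. unfold Phi.
  replace ((1 + s)/2) with (1 - (1 - s)/2) by field.
  eapply is_series_ext; [|exact Hc]. intros n. simpl. unfold ak.
  replace ((1 - s)/2) with ((1/2) * (1 - s)) by field. rewrite Rpow_mult_distr. ring.
Qed.

Lemma ex_abs_ak al : ex_series (fun k => Rabs (ak al k)).
Proof.
  pose proof (CV_disk_le (cb al) (1/2) (3/4)) as H. unfold CV_disk in H. apply H.
  rewrite !Rabs_right; lra. apply CV_disk_cb.
Qed.

Definition Tn al n := Series (fun k => Rabs (ak al (S n + k))).

Lemma ex_tail al n : ex_series (fun k => Rabs (ak al (S n + k))).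
Proof. apply (ex_series_incr_n (fun k => Rabs (ak al k)) (S n)). apply ex_abs_ak. Qed.

Lemma Tn_eq al n : Tn al n = Series (fun k => Rabs (ak al k)) - sum_f_R0 (fun k => Rabs (ak al k)) n.
Proof.
  rewrite (Series_incr_n (fun k => Rabs (ak al k)) (S n)); [|lia|apply ex_abs_ak].
  simpl Nat.pred. unfold Tn. ring.
Qed.

Lemma Tn_nonneg al n : 0 <= Tn al n.
Proof.
  unfold Tn. apply Rle_trans with (Series (fun _ => 0)).
  assert (E0 : Series (fun _ : nat => 0) = 0).
  { rewrite (Series_ext _ (fun n : nat => 0 * 0)) by (intros; ring). rewrite Series_scal_l; ring. }
  rewrite E0. lra. apply Series_le. intros; split; [lra|apply Rabs_pos]. apply ex_tail.
Qed.

Lemma Tn_small al eps : 0 < eps -> exists N, Tn al N < eps.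
Proof.
  intros He. pose proof (Series_correct _ (ex_abs_ak al)) as Hs.
  apply is_series_Reals in Hs. destruct (Hs eps He) as [N HN]. exists N.
  specialize (HN N (Nat.le_refl N)). unfold Rdist in HN. rewrite Tn_eq.
  apply Rabs_def2 in HN. lra.
Qed.

Lemma Tn_small2 al eps : 0 < eps -> exists N, forall n, (n >= N)%nat -> Tn al n < eps.
Proof.
  intros He. pose proof (Series_correct _ (ex_abs_ak al)) as Hs.
  apply is_series_Reals in Hs. destruct (Hs eps He) as [N HN]. exists N. intros n Hn.
  specialize (HN n Hn). unfold Rdist in HN. rewrite Tn_eq.
  apply Rabs_def2 in HN. lra.
Qed.

Lemma tail_bound al s n : 0 < s < 1 ->
  Rabs (Phi al s - sum_f_R0 (fun k => ak al k * (1 - s)^k) n) <= Tn al n.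
Proof.
  intros Hs. pose proof (Phi_series al s Hs) as H.
  assert (Ex : ex_series (fun k => ak al k * (1 - s)^k)) by (eexists; eauto).
  rewrite <- (is_series_unique _ _ H).
  rewrite (Series_incr_n _ (S n)) by (auto; lia). simpl Nat.pred.
  replace (sum_f_R0 (fun k => ak al k * (1 - s) ^ k) n +
     Series (fun k => ak al (S n + k) * (1 - s) ^ (S n + k)) -
     sum_f_R0 (fun k => ak al k * (1 - s) ^ k) n) with
    (Series (fun k => ak al (S n + k) * (1 - s) ^ (S n + k))) by ring.
  assert (Bd : forall k, 0 <= Rabs (ak al (S n + k) * (1 - s) ^ (S n + k)) <= Rabs (ak al (S n + k))).
  { intros k. split. apply Rabs_pos. rewrite Rabs_mult.
    assert (Rabs ((1 - s) ^ (S n + k)) <= 1).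
    { rewrite Rabs_right by (apply Rle_ge, pow_le; lra). apply Rle_trans with (1 ^ (S n + k)); [apply pow_incr; lra | rewrite pow1; lra]. }
    rewrite <- (Rmult_1_r (Rabs (ak al (S n + k)))) at 2. apply Rmult_le_compat_l; auto. apply Rabs_pos. }
  eapply Rle_trans. apply Series_Rabs.
  apply (ex_series_le (K:=R_AbsRing) (V:=R_CompleteNormedModule) _ (fun k => Rabs (ak al (S n + k)))).
  intros k. unfold norm; simpl; unfold abs; simpl. rewrite Rabs_Rabsolu. apply Bd. apply ex_tail.
  apply Series_le. auto. apply ex_tail.
Qed.

Lemma Rabs_def2b x y : Rabs x <= y -> - y <= x <= y.
Proof. unfold Rabs; destruct Rcase_abs; lra. Qed.

Definition GN p q al n s := sum_f_R0 (fun k => ak al k * P p (q + INR k) s) n.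
Definition Bk p q B k := B * poch q k / poch (p + q) k.

Lemma P_shift p q k s : 0 < s < 1 -> P p (q + INR k) s = P p q s * (1 - s)^k.
Proof.
  intros Hs. unfold P. replace (q + INR k - 1) with ((q - 1) + INR k) by ring.
  rewrite Rpower_plus, Rpower_pow by lra. ring.
Qed.

Lemma GN_eq p q al n s : 0 < s < 1 ->
  GN p q al n s = P p q s * sum_f_R0 (fun k => ak al k * (1 - s)^k) n.
Proof.
  intros Hs. unfold GN. induction n; cbn [sum_f_R0].
  - rewrite P_shift by auto. ring.
  - rewrite IHn, P_shift by auto. ring.
Qed.

Lemma GN_lim p q al B : 0 < p -> 0 < q -> lim01 (P p q) B -> forall n,
  cont01 (GN p q al n) /\ lim01 (GN p q al n) (sum_f_R0 (fun k => ak al k * Bk p q B k) n).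
Proof.
  intros Hp Hq HB n. induction n.
  - unfold GN; cbn [sum_f_R0]. split. apply cont01_scal, cont01_P.
    apply lim01_scal. apply cont01_P. apply (Beta_k p q B Hp Hq HB 0).
  - destruct IHn as [C1 L1]. unfold GN; cbn [sum_f_R0]. split.
    + apply (cont01_plus (GN p q al n) (fun s => ak al (S n) * P p (q + INR (S n)) s)); auto.
      apply cont01_scal, cont01_P.
    + apply (lim01_plus (GN p q al n) (fun s => ak al (S n) * P p (q + INR (S n)) s)); auto.
      apply cont01_scal, cont01_P. apply lim01_scal. apply cont01_P.
      apply (Beta_k p q B Hp Hq HB (S n)).
Qed.

Lemma cont01_Phi al : cont01 (Phi al).
Proof.
  intros x Hx. unfold Phi.
  apply (continuous_comp (fun s => (1 + s) / 2) (fun y => Rpower y al)).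
  apply (@ex_derive_continuous R_AbsRing R_NormedModule). eexists. auto_derive; auto.
  apply continuous_Rpower. lra.
Qed.

Lemma poch_le a c k : 0 < a <= c -> poch a k <= poch c k.
Proof.
  intros H. induction k; simpl. lra.
  pose proof (pos_INR k). pose proof (poch_pos a k (proj1 H)). nra.
Qed.

Lemma Bk_bound p q B k : 0 < p -> 0 < q -> Rabs (Bk p q B k) <= Rabs B.
Proof.
  intros Hp Hq. unfold Bk. pose proof (poch_pos q k Hq). pose proof (poch_pos (p+q) k ltac:(lra)).
  pose proof (poch_le q (p+q) k ltac:(lra)).
  unfold Rdiv. rewrite Rmult_assoc, Rabs_mult.
  rewrite (Rabs_right (poch q k * / poch (p + q) k)).
  2: { apply Rle_ge, Rmult_le_pos; [lra|left; apply Rinv_0_lt_compat; lra]. }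
  rewrite <- (Rmult_1_r (Rabs B)) at 2. apply Rmult_le_compat_l. apply Rabs_pos.
  apply (Rmult_le_reg_r (poch (p+q) k)); auto. rewrite Rmult_assoc, Rinv_l by lra. lra.
Qed.

Lemma main_lim p q al B : 0 < p -> 0 < q -> lim01 (P p q) B ->
  ex_series (fun k => ak al k * Bk p q B k) /\
  lim01 (fun s => P p q s * Phi al s) (Series (fun k => ak al k * Bk p q B k)).
Proof.
  intros Hp Hq HB.
  assert (Ex : ex_series (fun k => ak al k * Bk p q B k)).
  { apply (ex_series_le (K:=R_AbsRing) (V:=R_CompleteNormedModule) _ (fun k => Rabs B * Rabs (ak al k))).
    - intros k. unfold norm; simpl; unfold abs; simpl. rewrite Rabs_mult, Rmult_comm.
      apply Rmult_le_compat_r. apply Rabs_pos. apply Bk_bound; auto.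
    - apply (ex_series_scal (V:=R_NormedModule) (Rabs B) (fun k => Rabs (ak al k))). apply ex_abs_ak. }
  split; auto.
  set (L := Series (fun k => ak al k * Bk p q B k)).
  intros eps Heps.
  destruct (HB 1) as [d0 [Hd0 K0]]. lra.
  assert (HBp : 0 < Rabs B + 1) by (pose proof (Rabs_pos B); lra).
  destruct (Tn_small2 al (eps / 3 / (Rabs B + 1))) as [N1 HN1].
  { apply Rdiv_lt_0_compat; lra. }
  pose proof (Series_correct _ Ex) as Hs. apply is_series_Reals in Hs.
  destruct (Hs (eps/3)) as [N2 HN2]. lra.
  set (n := Nat.max N1 N2).
  destruct (GN_lim p q al B Hp Hq HB n) as [Cn Ln].
  destruct (Ln (eps/3)) as [d1 [Hd1 K1]]. lra.
  destruct (small_d d0 d1 Hd0 Hd1) as [d [Hd [D0 [D1 D2]]]].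
  exists d. split; auto. intros u v Hu Hv.
  assert (Huv : u <= v) by lra.
  assert (CG : cont01 (fun s => P p q s * Phi al s)) by (apply cont01_mult; [apply cont01_P|apply cont01_Phi]).
  assert (ExG : ex_RInt (fun s => P p q s * Phi al s) u v) by (apply ex_RInt01; auto; lra).
  assert (ExN : ex_RInt (GN p q al n) u v) by (apply ex_RInt01; auto; lra).
  assert (ExP : ex_RInt (P p q) u v) by (apply ex_RInt01; auto; try lra; apply cont01_P).
  set (T := Tn al n).
  assert (HT : T < eps / 3 / (Rabs B + 1)) by (apply HN1; unfold n; lia).
  assert (HT0 : 0 <= T) by apply Tn_nonneg.
  assert (HPB : RInt (P p q) u v <= Rabs B + 1).
  { specialize (K0 u v ltac:(lra) ltac:(lra)). apply Rabs_def2 in K0. pose proof (Rle_abs B). lra. }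
  assert (HP0 : 0 <= RInt (P p q) u v).
  { apply RInt_ge_0; auto. intros. unfold P. pose proof (Rpower_pos x (p-1)). pose proof (Rpower_pos (1-x) (q-1)). nra. }
  assert (ExTP : ex_RInt (fun s => T * P p q s) u v) by (apply ex_RInt01; auto; try lra; apply cont01_scal, cont01_P).
  assert (ExmTP : ex_RInt (fun s => (- T) * P p q s) u v) by (apply ex_RInt01; auto; try lra; apply cont01_scal, cont01_P).
  assert (RTP : RInt (fun s => T * P p q s) u v = T * RInt (P p q) u v) by (apply (RInt_scal (P p q) u v T); auto).
  assert (RmTP : RInt (fun s => (- T) * P p q s) u v = - T * RInt (P p q) u v) by (apply (RInt_scal (P p q) u v (-T)); auto).
  assert (Hpt : forall s, u < s < v -> Rabs (P p q s * Phi al s - GN p q al n s) <= T * P p q s).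
  { intros s Hs0. assert (0 < s < 1) by lra. rewrite GN_eq by auto.
    rewrite <- Rmult_minus_distr_l, Rabs_mult, Rabs_right.
    rewrite Rmult_comm. apply Rmult_le_compat_r. unfold P. pose proof (Rpower_pos s (p-1)). pose proof (Rpower_pos (1-s) (q-1)). nra.
    apply tail_bound; auto.
    unfold P. pose proof (Rpower_pos s (p-1)). pose proof (Rpower_pos (1-s) (q-1)). nra. }
  assert (Up : RInt (fun s => P p q s * Phi al s) u v <= RInt (fun s => GN p q al n s + T * P p q s) u v).
  { apply RInt_le; auto. apply ex_RInt01; auto; try lra. apply cont01_plus; auto. apply cont01_scal, cont01_P.
    intros s Hs0. specialize (Hpt s Hs0). apply Rabs_def2b in Hpt. lra. }
  assert (Lo : RInt (fun s => GN p q al n s + (- T) * P p q s) u v <= RInt (fun s => P p q s * Phi al s) u v).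
  { apply RInt_le; auto. apply ex_RInt01; auto; try lra. apply cont01_plus; auto. apply cont01_scal, cont01_P.
    intros s Hs0. specialize (Hpt s Hs0). apply Rabs_def2b in Hpt. lra. }
  rewrite (RInt_plus (GN p q al n) (fun s => T * P p q s)) in Up; auto.
  rewrite (RInt_plus (GN p q al n) (fun s => (- T) * P p q s)) in Lo; auto.
  change (plus ?a ?b) with (a + b) in Up, Lo. rewrite RTP in Up. rewrite RmTP in Lo.
  assert (K1' : Rabs (RInt (GN p q al n) u v - sum_f_R0 (fun k => ak al k * Bk p q B k) n) < eps / 3) by (apply K1; lra).
  assert (K2' : Rdist (sum_f_R0 (fun k => ak al k * Bk p q B k) n) L < eps / 3) by (apply HN2; unfold n; lia).
  unfold Rdist in K2'. apply Rabs_def2 in K1'. apply Rabs_def2 in K2'.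
  assert (T * RInt (P p q) u v <= eps / 3).
  { apply Rle_trans with (T * (Rabs B + 1)). apply Rmult_le_compat_l; auto.
    apply Rle_trans with (eps / 3 / (Rabs B + 1) * (Rabs B + 1)).
    apply Rmult_le_compat_r; lra. right; field; lra. }
  apply Rabs_def1; lra.
Qed.

Definition sg lam x := sqrt (lam ^ 2 + x ^ 2).
Definition Sx lam x := lam / sg lam x.
Definition dS lam x := - (lam * x) / ((lam ^ 2 + x ^ 2) * sg lam x).

Lemma sg_facts lam x : 0 < lam -> 0 < sg lam x /\ sg lam x * sg lam x = lam ^ 2 + x ^ 2 /\ lam <= sg lam x /\ x < sg lam x.
Proof.
  intros Hl. unfold sg.
  assert (0 < lam ^ 2 + x ^ 2) by nra.
  split. apply sqrt_lt_R0; auto.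
  split. apply sqrt_sqrt; lra.
  split.
  - apply Rle_trans with (sqrt (lam ^ 2)). rewrite sqrt_pow2; lra. apply sqrt_le_1_alt. nra.
  - destruct (Rle_dec x 0). pose proof (sqrt_lt_R0 _ H). lra.
    apply Rle_lt_trans with (sqrt (x ^ 2)). rewrite sqrt_pow2; lra. apply sqrt_lt_1_alt. split; nra.
Qed.

Lemma is_derive_S lam x : 0 < lam -> is_derive (Sx lam) x (dS lam x).
Proof.
  intros Hl. destruct (sg_facts lam x Hl) as [H1 [H2 _]].
  unfold Sx, dS. unfold sg in *.
  auto_derive; replace (lam * (lam * 1) + x * (x * 1)) with (lam ^ 2 + x ^ 2) by ring.
  - split; [nra|split; [lra|auto]].
  - rewrite H2. field. split; nra.
Qed.

Lemma continuous_dS lam x : 0 < lam -> continuous (dS lam) x.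
Proof.
  intros Hl. destruct (sg_facts lam x Hl) as [H1 [H2 _]].
  apply (@ex_derive_continuous R_AbsRing R_NormedModule).
  unfold dS, sg in *. eexists. auto_derive.
  replace (lam * (lam * 1) + x * (x * 1)) with (lam ^ 2 + x ^ 2) by ring.
  repeat split; try nra. apply Rmult_integral_contrapositive_currified; nra. reflexivity.
Qed.

Lemma S_range lam x : 0 < lam -> 0 < x -> 0 < Sx lam x < 1.
Proof.
  intros Hl Hx. destruct (sg_facts lam x Hl) as [H1 [H2 [H3 H4]]].
  assert (lam < sg lam x) by nra.
  unfold Sx. split. apply Rdiv_lt_0_compat; lra.
  apply (Rmult_lt_reg_r (sg lam x)); auto. unfold Rdiv. rewrite Rmult_assoc, Rinv_l; lra.
Qed.

Lemma f_value beta lam f x : 0 < beta -> 0 < lam -> 0 < x ->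
  derivable_pt_lim (ECR_cdf beta lam) x (f x) ->
  f x = beta * Rpower (1 - Sx lam x) (beta - 1) * (- dS lam x).
Proof.
  intros Hb Hl Hx Hf. apply is_derive_Reals in Hf.
  pose proof (S_range lam x Hl Hx) as Hs.
  assert (D1 : is_derive (fun t => 1 - Sx lam t) x (- dS lam x)).
  { apply (is_derive_ext (fun t => 1 + (-1) * Sx lam t)). intros; simpl; ring.
    replace (- dS lam x) with (0 + (-1) * dS lam x) by ring.
    apply (is_derive_plus (fun _ => 1) (fun t => (-1) * Sx lam t)). auto_derive; auto.
    apply (is_derive_scal (Sx lam)). apply is_derive_S; auto. }
  assert (D2 : is_derive (fun t => Rpower (1 - Sx lam t) beta) x (beta * Rpower (1 - Sx lam x) (beta - 1) * (- dS lam x))).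
  { replace (beta * Rpower (1 - Sx lam x) (beta - 1) * (- dS lam x)) with
      (scal (- dS lam x) (beta * Rpower (1 - Sx lam x) (beta - 1))) by (unfold scal; simpl; unfold mult; simpl; ring).
    apply (is_derive_comp (fun y => Rpower y beta) (fun t => 1 - Sx lam t)); auto.
    apply is_derive_Rpower. lra. }
  assert (D3 : is_derive (ECR_cdf beta lam) x (beta * Rpower (1 - Sx lam x) (beta - 1) * (- dS lam x))).
  { apply (is_derive_ext_loc (fun t => Rpower (1 - Sx lam t) beta)); auto.
    apply (locally_interval _ x 0 p_infty). simpl; auto. simpl; auto.
    intros y Hy _. simpl in Hy. unfold ECR_cdf. destruct (Rle_dec y 0). lra. unfold Sx, sg. reflexivity. }
  rewrite <- (is_derive_unique _ _ _ Hf). apply is_derive_unique. auto.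
Qed.

Definition Kc beta lam r := beta * Rpower lam r * Rpower 2 (r / 2).
Definition hfun beta lam r s := Kc beta lam r * (P (1 - r) (r / 2 + beta) s * Phi (r / 2) s).

Lemma ln_pos_lt a : 0 < a -> 0 < exp (ln a). Proof. intros; apply exp_pos. Qed.

Lemma key_identity beta lam r x : 0 < lam -> 0 < x ->
  Rpower x r * (beta * Rpower (1 - Sx lam x) (beta - 1)) = hfun beta lam r (Sx lam x).
Proof.
  intros Hl Hx. pose proof (S_range lam x Hl Hx) as Hs.
  destruct (sg_facts lam x Hl) as [H1 [H2 [H3 H4]]].
  set (s := Sx lam x) in *. set (sgm := sg lam x) in *.
  unfold hfun, Kc, P, Phi, Rpower.
  assert (Ls : ln s = ln lam - ln sgm) by (unfold s, Sx; rewrite ln_div; auto).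
  assert (Lh : ln ((1 + s) / 2) = ln (1 + s) - ln 2) by (rewrite ln_div; lra).
  assert (Lp : ln (1 - s) + ln (1 + s) = 2 * ln x - 2 * ln sgm).
  { rewrite <- ln_mult by lra.
    replace ((1 - s) * (1 + s)) with ((x / sgm) * (x / sgm)).
    rewrite ln_mult, ln_div; try apply Rdiv_lt_0_compat; auto. ring.
    unfold s, Sx. fold sgm. field_simplify_eq. 2: lra.
    replace (sgm ^ 2) with (sgm * sgm) by ring. rewrite H2. ring. }
  replace (ln (1 + s)) with (2 * ln x - 2 * ln sgm - ln (1 - s)) in Lh by lra.
  rewrite Lh, Ls.
  transitivity (beta * exp (r * ln x + (beta - 1) * ln (1 - s))).
  rewrite exp_plus; ring.
  transitivity (beta * exp (r * ln lam + r / 2 * ln 2 + ((1 - r - 1) * (ln lam - ln sgm) +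
     (r / 2 + beta - 1) * ln (1 - s) + r / 2 * (2 * ln x - 2 * ln sgm - ln (1 - s) - ln 2)))).
  apply Rmult_eq_compat_l. apply f_equal. clearbody s sgm. field.
  rewrite !exp_plus; ring.
Qed.

Lemma lim01_to_improper g l : cont01 g -> lim01 g l -> improper_int_0_1 g l.
Proof.
  intros Cg Hl. split.
  - intros u v Hu Huv Hv. constructor. apply ex_RInt_Reals_0. apply ex_RInt01; auto; lra.
  - intros eps Heps. destruct (Hl eps Heps) as [d [Hd K]]. exists d. split; auto.
    intros u v pr Hu Hv. rewrite <- RInt_Reals. apply K; auto.
Qed.

Lemma S_small lam v del : 0 < lam -> 0 < del -> lam / del < v -> Sx lam v < del.
Proof.
  intros Hl Hd Hv. assert (0 < lam / del) by (apply Rdiv_lt_0_compat; auto).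
  destruct (sg_facts lam v Hl) as [H1 [H2 [H3 H4]]].
  unfold Sx. apply (Rmult_lt_reg_r (sg lam v)); auto. unfold Rdiv at 1. rewrite Rmult_assoc, Rinv_l by lra.
  assert (lam < del * v).
  { apply (Rmult_lt_reg_r (/ del)). apply Rinv_0_lt_compat; auto.
    replace (del * v * / del) with v by (field; lra). exact Hv. }
  nra.
Qed.

Lemma S_big lam u del : 0 < lam -> 0 < del -> 0 < u -> u < lam * Rmin del 1 -> 1 - del < Sx lam u.
Proof.
  intros Hl Hd Hu Hu2.
  set (m := Rmin del 1) in *.
  assert (Hm1 : m <= 1) by apply Rmin_r. assert (Hm2 : m <= del) by apply Rmin_l.
  assert (Hm0 : 0 < m) by (apply Rmin_glb_lt; lra).
  destruct (sg_facts lam u Hl) as [H1 [H2 [H3 H4]]].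
  set (sg0 := sg lam u) in *.
  assert (Hu3 : u * u < lam * lam * del).
  { apply Rlt_le_trans with ((lam * m) * (lam * m)). nra.
    assert (m * m <= del) by nra. nra. }
  assert (E : (sg0 - lam) * (sg0 + lam) = u * u) by nra.
  assert (Hk : (sg0 - lam) * (2 * lam) <= u * u) by nra.
  assert (Hk2 : sg0 - lam < sg0 * del) by nra.
  unfold Sx. fold sg0.
  apply (Rmult_lt_reg_r sg0); auto. unfold Rdiv. rewrite Rmult_assoc, Rinv_l by lra. nra.
Qed.

Definition mh beta lam r s := (-1) * hfun beta lam r s.

Lemma cont01_hfun beta lam r : cont01 (hfun beta lam r).
Proof.
  unfold hfun. apply (cont01_scal (Kc beta lam r) (fun s => P (1 - r) (r / 2 + beta) s * Phi (r / 2) s)).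
  apply cont01_mult. apply cont01_P. apply cont01_Phi.
Qed.

Lemma cov beta lam r u v : 0 < lam -> 0 < u -> 0 < v ->
  is_RInt (fun y => scal (dS lam y) (mh beta lam r (Sx lam y))) u v
    (RInt (mh beta lam r) (Sx lam u) (Sx lam v)).
Proof.
  intros Hl Hu Hv.
  apply (is_RInt_comp (V:=R_CompleteNormedModule) (mh beta lam r) (Sx lam) (dS lam)).
  - intros x Hx. assert (0 < x) by (unfold Rmin, Rmax in Hx; destruct Rle_dec; lra).
    unfold mh. apply (cont01_scal (-1) (hfun beta lam r) (cont01_hfun beta lam r)).
    apply S_range; auto.
  - intros x Hx. split. apply is_derive_S; auto. apply continuous_dS; auto.
Qed.

Lemma g_eq beta lam r f y : 0 < beta -> 0 < lam -> 0 < y ->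
  derivable_pt_lim (ECR_cdf beta lam) y (f y) ->
  Rpower y r * f y = scal (dS lam y) (mh beta lam r (Sx lam y)).
Proof.
  intros Hb Hl Hy Hf. rewrite (f_value beta lam f y Hb Hl Hy Hf).
  unfold mh. rewrite <- key_identity by auto. unfold scal; simpl; unfold mult; simpl. ring.
Qed.

Theorem corollary3 (beta lambda r : R) (f : R -> R)
  (hbeta : 0 < beta) (hlambda : 0 < lambda)
  (hr1 : - (2 * beta) < r) (hr2 : r < 1)
  (hf : forall x, 0 < x -> derivable_pt_lim (ECR_cdf beta lambda) x (f x)) :
  exists EXr B H,
    improper_int_0_inf (fun x => Rpower x r * f x) EXr /\
    is_Beta (1 - r) (r / 2 + beta) B /\
    is_hyp2F1 (- (r / 2)) (r / 2 + beta) (1 - r / 2 + beta) (1 / 2) H /\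
    EXr = beta * Rpower (lambda * sqrt 2) r * B * H.
Proof.
  assert (hp : 0 < 1 - r) by lra. assert (hq : 0 < r / 2 + beta) by lra.
  destruct (ex_lim01_P (1 - r) (r / 2 + beta) hp hq) as [B HB].
  destruct (main_lim (1 - r) (r / 2 + beta) (r / 2) B hp hq HB) as [Ex HL].
  set (L := Series (fun k => ak (r / 2) k * Bk (1 - r) (r / 2 + beta) B k)) in *.
  assert (HLK : lim01 (hfun beta lambda r) (Kc beta lambda r * L)).
  { unfold hfun. apply lim01_scal; auto. apply cont01_mult. apply cont01_P. apply cont01_Phi. }
  set (hyp := fun k => poch (- (r / 2)) k * poch (r / 2 + beta) k / poch (1 - r / 2 + beta) k * (1 / 2) ^ k / INR (fact k)).
  assert (Hyp_eq : forall k, hyp k = ak (r / 2) k * Bk (1 - r) (r / 2 + beta) 1 k).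
  { intros k. unfold hyp, ak, Bk, cb. replace (1 - r + (r / 2 + beta)) with (1 - r / 2 + beta) by field.
    pose proof (poch_pos (1 - r / 2 + beta) k ltac:(lra)). pose proof (INR_fact_pos k).
    field. split; lra. }
  assert (ExH : ex_series hyp).
  { apply (ex_series_le (K:=R_AbsRing) (V:=R_CompleteNormedModule) _ (fun k => Rabs (ak (r / 2) k))).
    - intros k. unfold norm; simpl; unfold abs; simpl. rewrite Hyp_eq, Rabs_mult.
      rewrite <- (Rmult_1_r (Rabs (ak (r / 2) k))) at 2. apply Rmult_le_compat_l. apply Rabs_pos.
      eapply Rle_trans. apply Bk_bound; auto. rewrite Rabs_R1; lra.
    - apply ex_abs_ak. }
  set (H := Series hyp).
  assert (LBH : L = B * H).
  { unfold L, H. rewrite <- Series_scal_l. apply Series_ext. intros k. rewrite Hyp_eq.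
    unfold Bk. field. apply Rgt_not_eq, poch_pos; lra. }
  exists (Kc beta lambda r * L), B, H.
  split; [|split; [|split]].
  -
    split.
    + intros u v Hu Huv. constructor. apply ex_RInt_Reals_0.
      apply (ex_RInt_ext (fun y => scal (dS lambda y) (mh beta lambda r (Sx lambda y)))).
      intros x Hx. assert (0 < x) by (unfold Rmin, Rmax in Hx; destruct Rle_dec; lra).
      symmetry; apply g_eq; auto.
      eexists. apply cov; auto; lra.
    + intros eps Heps. destruct (HLK eps Heps) as [del [Hdel Kd]].
      exists (lambda * Rmin del 1). split. apply Rmult_lt_0_compat; auto. apply Rmin_glb_lt; lra.
      exists (lambda / del). intros u v pr Hu Hv.
      assert (0 < lambda / del) by (apply Rdiv_lt_0_compat; auto).
      rewrite <- RInt_Reals.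
      rewrite (RInt_ext _ (fun y => scal (dS lambda y) (mh beta lambda r (Sx lambda y)))).
      2: { intros x Hx. assert (0 < x) by (unfold Rmin, Rmax in Hx; destruct Rle_dec; lra).
           apply g_eq; auto. }
      rewrite (is_RInt_unique _ _ _ _ (cov beta lambda r u v hlambda ltac:(lra) ltac:(lra))).
      pose proof (S_range lambda u hlambda ltac:(lra)). pose proof (S_range lambda v hlambda ltac:(lra)).
      assert (ExI : ex_RInt (hfun beta lambda r) (Sx lambda u) (Sx lambda v)) by (apply ex_RInt01; auto; apply cont01_hfun).
      assert (E1 : RInt (mh beta lambda r) (Sx lambda u) (Sx lambda v) =
                   scal (-1) (RInt (hfun beta lambda r) (Sx lambda u) (Sx lambda v))).
      { exact (RInt_scal (hfun beta lambda r) _ _ (-1) ExI). }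
      assert (E2 : opp (RInt (hfun beta lambda r) (Sx lambda u) (Sx lambda v)) =
                   RInt (hfun beta lambda r) (Sx lambda v) (Sx lambda u)).
      { exact (opp_RInt_swap _ _ _ ExI). }
      rewrite E1. replace (scal (-1) (RInt (hfun beta lambda r) (Sx lambda u) (Sx lambda v)))
        with (opp (RInt (hfun beta lambda r) (Sx lambda u) (Sx lambda v))).
      2: { unfold scal, opp; simpl; unfold mult; simpl. ring. }
      rewrite E2.
      apply Kd. split. apply S_range; lra. apply S_small; auto.
      split. apply S_big; auto; lra. apply S_range; lra.
  - unfold is_Beta. apply lim01_to_improper. apply cont01_P.
    replace (1 - r - 1) with ((1 - r) - 1) by ring. exact HB.
  - unfold is_hyp2F1. apply is_series_Reals. apply Series_correct. exact ExH.
  - rewrite LBH. unfold Kc.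
    rewrite <- Rpower_mult_distr by (try apply sqrt_lt_R0; lra).
    rewrite <- (Rpower_sqrt 2) by lra. rewrite Rpower_mult.
    replace (/ 2 * r) with (r / 2) by field. ring.
Qed.
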